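(* Let $R$ be a semiring and $f, g: N \to M$ two homomorphisms of left $R$-semimodules. Define $m \sim_{(f,g)} m'$ if and only if there exist $k \ge 1$, elements $m_1, \ldots, m_k \in M$ and $n_1, \ldots, n_k, n'_1, \ldots, n'_k \in N$ such that $m = m_1 + f(n_1) + g(n'_1)$, $m_i + f(n'_i) + g(n_i) = m_{i+1} + f(n_{i+1}) + g(n'_{i+1})$ for $1 \le i \le k-1$, and $m_k + f(n'_k) + g(n_k) = m'$. Then $\sim_{(f,g)}$ is a congruence relation on $M$.
   Context: A semiring $R$ is a commutative monoid $(R,+,0)$ with an associative multiplication with unit $1$, distributive on both sides, and with $0r = 0 = r0$. A left $R$-semimodule is a commutative monoid $(M,+,0)$ with a map $R\times M \to M$ satisfying $(rr')m = r(r'm)$, $(r+r')m = rm + r'm$, $r(m+m') = rm + rm'$, $1m = m$, $0m = 0 = r0$. A homomorphism of left $R$-semimodules is an additive map $f$ with $f(rm) = rf(m)$. A congruence relation on $M$ is an equivalence relation $\sim$ such that $m \sim m'$ implies $m + n \sim m' + n$ and $rm \sim rm'$ for all $n \in M$, $r \in R$. *)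

(* Defs.v *)
From HB Require Import structures.
From mathcomp Require Import all_boot all_order all_algebra.
Set Implicit Arguments. Unset Strict Implicit. Unset Printing Implicit Defensive.
Import GRing.Theory.
Local Open Scope ring_scope.

(* Semiring = pzSemiRingType (0 = 1 allowed); left R-semimodule = lSemiModType R;
   semimodule homomorphism = {linear N -> M} (additive and scalable). *)

Definition congruence (R : pzSemiRingType) (M : lSemiModType R) (rel : M -> M -> Prop) : Prop :=
  [/\ (forall m, rel m m),
      (forall m m', rel m m' -> rel m' m),
      (forall m m' m'', rel m m' -> rel m' m'' -> rel m m''),
      (forall m m' n, rel m m' -> rel (m + n) (m' + n))
    & (forall (r : R) m m', rel m m' -> rel (r *: m) (r *: m'))].

(* m ~_(f,g) m' ; the paper's indices 1..k are shifted to 0..k-1. *)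
Definition fg_rel (R : pzSemiRingType) (N M : lSemiModType R)
  (f g : {linear N -> M}) (m m' : M) : Prop :=
  exists k : nat, (0 < k)%N /\
  exists (ms : nat -> M) (ns ns' : nat -> N),
    [/\ m = ms 0%N + f (ns 0%N) + g (ns' 0%N),
        (forall i : nat, (i.+1 < k)%N ->
           ms i + f (ns' i) + g (ns i) = ms i.+1 + f (ns i.+1) + g (ns' i.+1))
      & ms k.-1 + f (ns' k.-1) + g (ns k.-1) = m'].

(* Main.v *)
Require Import Defs.
From mathcomp Require Import all_boot all_order all_algebra.
From mathcomp Require Import zify.
Import GRing.Theory.
Local Open Scope ring_scope.

Lemma shift (R : pzSemiRingType) (M : lSemiModType R) (a b c n : M) :
  a + n + b + c = a + b + c + n.
Proof. by rewrite (addrAC a) (addrAC (a + b)). Qed.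

Theorem lemma2p12 (R : pzSemiRingType) (N M : lSemiModType R)
  (f g : {linear N -> M}) :
  congruence (fg_rel f g).
Proof.
split.
- move=> m; exists 1%N; split => //.
  exists (fun _ => m), (fun _ => 0), (fun _ => 0); split => //=;
  by rewrite !raddf0 !addr0.
- move=> m m' [k [k0 [ms [ns [ns' [H0 Hi Hk]]]]]].
  exists k; split => //.
  exists (fun i => ms (k.-1 - i)%N), (fun i => ns' (k.-1 - i)%N),
         (fun i => ns (k.-1 - i)%N); split => /=.
  + by rewrite subn0 Hk.
  + move=> i hi.
    have -> : (k.-1 - i = (k.-1 - i.+1).+1)%N by lia.
    rewrite -(Hi (k.-1 - i.+1)%N); last by lia.
    done.
  + by rewrite subnn H0.
- move=> m m' m'' [k1 [k10 [ms1 [ns1 [ns1' [H10 H1i H1k]]]]]]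
                  [k2 [k20 [ms2 [ns2 [ns2' [H20 H2i H2k]]]]]].
  exists (k1 + k2)%N; split; first lia.
  exists (fun i => if (i < k1)%N then ms1 i else ms2 (i - k1)%N),
         (fun i => if (i < k1)%N then ns1 i else ns2 (i - k1)%N),
         (fun i => if (i < k1)%N then ns1' i else ns2' (i - k1)%N); split => /=.
  + by rewrite k10.
  + move=> i hi.
    case: (ltnP i.+1 k1) => h1.
    * by rewrite (ltnW h1); apply: H1i.
    * case: (ltnP i k1) => h2.
      -- have ei : i = k1.-1 by lia.
         have -> : (i.+1 - k1 = 0)%N by lia.
         by rewrite ei H1k H20.
      -- have -> : (i.+1 - k1 = (i - k1).+1)%N by lia.
         apply: H2i; lia.
  + have -> : ((k1 + k2).-1 < k1)%N = false by lia.
    have -> : ((k1 + k2).-1 - k1 = k2.-1)%N by lia.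
    done.
- move=> m m' n [k [k0 [ms [ns [ns' [H0 Hi Hk]]]]]].
  exists k; split => //.
  exists (fun i => ms i + n), ns, ns'; split => /=.
  + by rewrite H0 [RHS]shift.
  + by move=> i hi; rewrite [LHS]shift [RHS]shift Hi.
  + by rewrite -Hk [LHS]shift.
- move=> r m m' [k [k0 [ms [ns [ns' [H0 Hi Hk]]]]]].
  exists k; split => //.
  exists (fun i => r *: ms i), (fun i => r *: ns i), (fun i => r *: ns' i);
  split => /=.
  + by rewrite H0 !linearZ !scalerDr.
  + by move=> i hi; rewrite !linearZ -!scalerDr Hi.
  + by rewrite -Hk !linearZ !scalerDr.
Qed.
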